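(* Let $G$ be a discrete group that contains an amenable normalish subgroup. Then for every coefficient $G$-module $(\pi,E)$ with $E$ mixing and every $n\ge 0$, the bounded cohomology group $H_b^n(G,E)$ is trivial.
   Context: A subgroup $H<G$ is normalish if for every $n\ge1$ and $t_1,\dots,t_n\in G$ the intersection $\bigcap_i t_iHt_i^{-1}$ is infinite. A coefficient $G$-module $(\pi,E)$ is an isometric linear representation $\pi$ of $G$ on a Banach space $E$ which is the dual of a separable Banach space, such that each $\pi(s)$ is weak*-continuous. $E$ is mixing if for every $x\in E\setminus\{0\}$ the stabilizer $\{s\in G:\pi(s)x=x\}$ is finite. The bounded cohomology $H_b^n(G,E)$ is the $n$-th cohomology of the complex $0\to\ell^\infty(G,E)^G\to\ell^\infty(G^2,E)^G\to\cdots$ of bounded $G$-equivariant functions with the standard homogeneous coboundary maps. *)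

(* Defs.v *)
From HB Require Import structures.
From mathcomp Require Import all_boot all_order all_algebra.
From mathcomp Require Import all_classical all_reals all_analysis.
Set Implicit Arguments. Unset Strict Implicit. Unset Printing Implicit Defensive.
Import Order.TTheory GRing.Theory Num.Theory.
Import numFieldNormedType.Exports.
Local Open Scope classical_set_scope.
Local Open Scope ring_scope.

Definition is_group (G : Type) (mul : G -> G -> G) (inv : G -> G) (one : G) : Prop :=
  [/\ (forall x y z, mul x (mul y z) = mul (mul x y) z),
      (forall x, mul one x = x), (forall x, mul x one = x),
      (forall x, mul (inv x) x = one) & (forall x, mul x (inv x) = one)].

Definition is_subgroup (G : Type) (mul : G -> G -> G) (inv : G -> G) (one : G)
  (H : set G) : Prop :=
  [/\ H one, (forall x y, H x -> H y -> H (mul x y)) & (forall x, H x -> H (inv x))].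

(** Normalish: every finite intersection (n >= 1 conjugates) of conjugates
    t_i H t_i^{-1} is infinite.  x \in t H t^{-1}  <->  t^{-1} x t \in H. *)
Definition normalish (G : Type) (mul : G -> G -> G) (inv : G -> G) (H : set G) : Prop :=
  forall (n : nat) (t : 'I_n.+1 -> G),
    infinite_set [set x | forall i, H (mul (mul (inv (t i)) x) (t i))].

(** Elements of l^oo(H) are represented by functions G -> R
    bounded on H, two such functions being identified when they agree on H. *)
Definition bounded_on (R : realType) (G : Type) (H : set G) (phi : G -> R) : Prop :=
  exists M : R, forall x, H x -> `|phi x| <= M.

Definition amenable_subgroup (R : realType) (G : Type) (mul : G -> G -> G)
  (H : set G) : Prop :=
  exists m : (G -> R) -> R,
    [/\ (forall phi psi, (forall x, H x -> phi x = psi x) -> m phi = m psi),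
        (forall (a : R) phi psi, bounded_on H phi -> bounded_on H psi ->
            m (fun x => a * phi x + psi x) = a * m phi + m psi),
        (forall phi, bounded_on H phi -> (forall x, H x -> 0 <= phi x) -> 0 <= m phi),
        m (fun _ => 1) = 1 &
        (forall h phi, H h -> bounded_on H phi -> m (fun x => phi (mul h x)) = m phi)].

Definition separable (R : realType) (F : normedModType R) : Prop :=
  exists D : set F, countable D /\ closure D = setT.

(** [p] identifies E isometrically and linearly with the continuous dual F^* of F:
    x |-> p x . is linear, isometric (operator norm) and onto F^*. *)
Definition dual_pairing (R : realType) (E F : normedModType R) (p : E -> F -> R) : Prop :=
  [/\ (forall x (a : R) f g, p x (a *: f + g) = a * p x f + p x g),
      (forall (a : R) x y f, p (a *: x + y) f = a * p x f + p y f),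
      (forall x f, `|p x f| <= `|x| * `|f|),
      (forall x (e : R), 0 < e -> exists f, `|f| <= 1 /\ `|x| - e < `|p x f|) &
      (forall phi : F -> R,
         (forall (a : R) f g, phi (a *: f + g) = a * phi f + phi g) ->
         (exists M : R, forall f, `|phi f| <= M * `|f|) ->
         exists x, forall f, p x f = phi f)].

Definition wstar_open (R : realType) (E F : normedModType R) (p : E -> F -> R)
  (U : set E) : Prop :=
  forall x, U x -> exists (S : seq F) (e : R), 0 < e /\
    (forall y, (forall f, f \in S -> `|p (y - x) f| < e) -> U y).

Definition wstar_continuous (R : realType) (E F : normedModType R) (p : E -> F -> R)
  (T : E -> E) : Prop :=
  forall U, wstar_open p U -> wstar_open p (T @^-1` U).

Definition wstar_continuous_rep (R : realType) (G : Type) (E F : normedModType R)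
  (p : E -> F -> R) (pi : G -> E -> E) : Prop :=
  forall s, wstar_continuous p (pi s).

Definition coefficient_module (R : realType) (G : Type) (mul : G -> G -> G) (one : G)
  (E F : normedModType R) (p : E -> F -> R) (pi : G -> E -> E) : Prop :=
  separable F /\ dual_pairing p /\
  wstar_continuous_rep p pi /\
  (forall s (a : R) x y, pi s (a *: x + y) = a *: pi s x + pi s y) /\
  (forall s x, `|pi s x| = `|x|) /\
  (forall x, pi one x = x) /\
  (forall s t x, pi (mul s t) x = pi s (pi t x)).

Definition mixing (R : realType) (G : Type) (E : normedModType R) (pi : G -> E -> E) : Prop :=
  forall x : E, x != 0 -> finite_set [set s | pi s x = x].

Definition bounded_cochain (R : realType) (G : Type) (E : normedModType R) (n : nat)
  (c : ('I_n -> G) -> E) : Prop :=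
  exists M : R, forall g, `|c g| <= M.

Definition equivariant (G : Type) (E : Type) (mul : G -> G -> G) (pi : G -> E -> E)
  (n : nat) (c : ('I_n -> G) -> E) : Prop :=
  forall s g, c (fun i => mul s (g i)) = pi s (c g).

Definition coboundary (R : realType) (G : Type) (E : normedModType R) (n : nat)
  (c : ('I_n.+1 -> G) -> E) : ('I_n.+2 -> G) -> E :=
  fun g => \sum_(i < n.+2) ((-1 : R) ^+ i) *: c (fun j => g (lift i j)).

(** H_b^n(G,E) = 0: every bounded equivariant n-cocycle (a function on G^{n+1})
    is the coboundary of a bounded equivariant (n-1)-cochain (for n = 0: is zero). *)
Definition Hb_trivial (R : realType) (G : Type) (mul : G -> G -> G)
  (E : normedModType R) (pi : G -> E -> E) (n : nat) : Prop :=
  forall c : ('I_n.+1 -> G) -> E,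
    bounded_cochain c -> equivariant mul pi c -> coboundary c = (fun _ => 0) ->
    match n return ((('I_n.+1 -> G) -> E) -> Prop) with
    | 0 => fun c => c = (fun _ => 0)
    | m.+1 => fun c => exists b : ('I_m.+1 -> G) -> E,
        [/\ bounded_cochain b, equivariant mul pi b & coboundary b = c]
    end c.

(* Main.v *)
Require Import Defs.
From HB Require Import structures.
From mathcomp Require Import all_boot all_order all_algebra.
From mathcomp Require Import all_classical all_reals all_analysis.
From mathcomp Require Import ring lra zify.
Import Order.TTheory GRing.Theory Num.Theory.
Import numFieldNormedType.Exports.
Local Open Scope classical_set_scope.
Local Open Scope ring_scope.
Lemma dbl0 (V : zmodType) (x : V) : x = x + x -> x = 0.
Proof. by move=> h; have := congr1 (fun y => y - x) h; rewrite /= subrr addrK. Qed.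

Section Adj.
Variables (R : realType) (E F : normedModType R) (p : E -> F -> R).
Hypothesis pf : forall x (a : R) f g, p x (a *: f + g) = a * p x f + p x g.
Hypothesis px : forall (a : R) x y f, p (a *: x + y) f = a * p x f + p y f.

Lemma lin_repr : forall (S : seq F) (L : E -> R),
  (forall a x y, L (a *: x + y) = a * L x + L y) ->
  (forall y, (forall g, g \in S -> p y g = 0) -> L y = 0) ->
  exists f', forall y, L y = p y f'.
Proof.
have L0 (L : E -> R) : (forall a x y, L (a *: x + y) = a * L x + L y) -> L 0 = 0.
  by move=> hL; apply: dbl0; have := hL 1 0 0; rewrite scale1r addr0 mul1r.
have LZ (L : E -> R) : (forall a x y, L (a *: x + y) = a * L x + L y) -> forall a x, L (a *: x) = a * L x.
  by move=> hL a x; have := hL a x 0; rewrite addr0 (L0 _ hL) addr0.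
have LB (L : E -> R) : (forall a x y, L (a *: x + y) = a * L x + L y) -> forall x y, L (x - y) = L x - L y.
  by move=> hL x y; rewrite -scaleN1r addrC hL mulN1r addrC.
have pl f : forall a x y, p (a *: x + y) f = a * p x f + p y f by move=> a x y; exact: px.
elim=> [|g S IH] L hL hk.
  exists 0 => y; rewrite hk; last by move=> g; rewrite in_nil.
  by apply/esym/dbl0; have := pf y 1 0 0; rewrite scale1r addr0 mul1r.
have [hA|hB] := pselect (forall y, (forall g', g' \in S -> p y g' = 0) -> p y g = 0).
  apply: IH => // y hy; apply: hk => g'; rewrite in_cons => /orP[/eqP ->|]; first exact: hA.
  exact: hy.
have [y0 hy0] : exists y0, (forall g', g' \in S -> p y0 g' = 0) /\ p y0 g != 0.
  apply: contrapT => hn. apply: hB => y hy. apply: contrapT => hne.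
  by apply: hn; exists y; split => //; apply/eqP.
case: hy0 => hy0S hy0g.
pose c := L y0 / p y0 g.
pose L' := fun y => L y - c * p y g.
have hL' : forall a x y, L' (a *: x + y) = a * L' x + L' y.
  by move=> a x y; rewrite /L' hL px mulrDr !mulrA [c * a]mulrC; lra.
have [f'' hf''] : exists f', forall y, L' y = p y f'.
  apply: IH => // y hy; rewrite /L'.
  pose y' := y - (p y g / p y0 g) *: y0.
  have hy'S : forall g', g' \in S -> p y' g' = 0.
    by move=> g' hg'; rewrite /y' (LB _ (pl g')) (LZ _ (pl g')) (hy g') // (hy0S g') // mulr0 subrr.
  have hy'g : p y' g = 0.
    by rewrite /y' (LB _ (pl g)) (LZ _ (pl g)) mulfVK // subrr.
  have : L y' = 0.
    apply: hk => g'; rewrite in_cons => /orP[/eqP ->|]; first exact: hy'g.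
    exact: hy'S.
  rewrite /y' (LB _ hL) (LZ _ hL) /c => /eqP; rewrite subr_eq0 => /eqP ->.
  ring.
exists (c *: g + f'') => y; rewrite pf -hf'' /L'; lra.
Qed.

Lemma adjoint (T : E -> E) :
  (forall (a : R) x y, T (a *: x + y) = a *: T x + T y) ->
  wstar_continuous p T ->
  forall f, exists f', forall y, p (T y) f = p y f'.
Proof.
move=> hT hc f.
have T0 : T 0 = 0 by apply: dbl0; have := hT 1 0 0; rewrite !scale1r addr0.
have p0 g : p 0 g = 0 by apply: dbl0; have := px 1 0 0 g; rewrite scale1r addr0 mul1r.
have pB x y g : p (x - y) g = p x g - p y g by rewrite -scaleN1r addrC px mulN1r addrC.
have pZ a x g : p (a *: x) g = a * p x g by have := px a x 0 g; rewrite addr0 p0 addr0.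
have hU : wstar_open p [set y | `|p y f| < 1].
  move=> x /= hx; exists [:: f], (1 - `|p x f|); split; first by rewrite subr_gt0.
  move=> y hy; have := hy f (mem_head _ _); rewrite pB => h.
  have := ler_normD (p y f - p x f) (p x f); rewrite subrK => h2.
  by apply: le_lt_trans h2 _; rewrite -ltrBrDr.
have := hc _ hU 0; rewrite /= T0 p0 normr0 => /(_ ltr01) [S [e [he hS]]].
apply: (@lin_repr S (fun y => p (T y) f)).
  by move=> a x y; rewrite hT px.
have TZ a x : T (a *: x) = a *: T x by have := hT a x 0; rewrite addr0 T0 addr0.
move=> y hy; apply: contrapT => hne0; have hne : p (T y) f != 0 by apply/eqP.
have := hS ((p (T y) f)^-1 *: y) => /=.
rewrite TZ pZ mulVf // => h.
have : `|(1:R)| < 1 by apply: h => g hg; rewrite subr0 pZ hy // mulr0 normr0.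
by rewrite normr1 ltxx.
Qed.
End Adj.

Section Mean.
Variables (R : realType) (G : Type) (mul : G -> G -> G) (Hs : set G) (m : (G -> R) -> R).
Hypothesis mlin : forall (a : R) phi psi, bounded_on Hs phi -> bounded_on Hs psi ->
            m (fun x => a * phi x + psi x) = a * m phi + m psi.
Hypothesis mpos : forall phi, bounded_on Hs phi -> (forall x, Hs x -> 0 <= phi x) -> 0 <= m phi.
Hypothesis m1 : m (fun _ => 1) = 1.
Hypothesis minv : forall h phi, Hs h -> bounded_on Hs phi -> m (fun x => phi (mul h x)) = m phi.

Lemma bo_glob (phi : G -> R) (K : R) : (forall x, `|phi x| <= K) -> bounded_on Hs phi.
Proof. by move=> H; exists K => x _. Qed.

Lemma mlin' (a : R) phi psi chi : bounded_on Hs phi -> bounded_on Hs psi ->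
  (forall x, chi x = a * phi x + psi x) -> m chi = a * m phi + m psi.
Proof. move=> b1 b2 e; rewrite -mlin //; congr m; apply/funext => x; exact: e. Qed.

Lemma bo_cst (c : R) : bounded_on Hs (fun _ => c).
Proof. by exists `|c|. Qed.

Lemma m0 : m (fun _ => 0) = 0.
Proof.
have h := @mlin 1 _ _ (bo_cst (0:R)) (bo_cst (0:R)); rewrite /= mul1r addr0 mul1r in h.
by have := congr1 (fun y => y - m (fun _ => 0)) h; rewrite /= subrr addrK.
Qed.

Lemma mcst (c : R) : m (fun _ => c) = c.
Proof.
rewrite (@mlin' c (fun _ => 1) (fun _ => 0)) ?m1 ?m0 ?mulr1 ?addr0 //; try exact: bo_cst.
Qed.

Lemma mbound phi (B : R) : bounded_on Hs phi -> (forall x, Hs x -> `|phi x| <= B) -> `|m phi| <= B.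
Proof.
move=> bp hb; rewrite ler_norml; apply/andP; split.
- have : 0 <= m (fun x => B + phi x).
    apply: mpos; first by case: bp => M hM; exists (`|B| + M) => x hx; apply: le_trans (ler_normD _ _) _; rewrite lerD2l; exact: hM.
    by move=> x hx; have := hb x hx; rewrite ler_norml => /andP[h _]; rewrite -lerBlDl sub0r.
  rewrite (@mlin' B (fun _ => 1) phi (fun x => B + phi x) (bo_cst 1) bp); last by move=> x; rewrite mulr1.
  by rewrite m1 mulr1 -lerBlDl sub0r.
- have : 0 <= m (fun x => B - phi x).
    apply: mpos; first by case: bp => M hM; exists (`|B| + M) => x hx; apply: le_trans (ler_normB _ _) _; rewrite lerD2l; exact: hM.
    by move=> x hx; have := hb x hx; rewrite ler_norml => /andP[_ h]; rewrite subr_ge0.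
  rewrite (@mlin' (-1) phi (fun _ => B) (fun x => B - phi x) bp (bo_cst B)); last by move=> x; rewrite mulN1r addrC.
  by rewrite mcst mulN1r addrC subr_ge0.
Qed.

Variables (E F : normedModType R) (p : E -> F -> R).
Hypothesis pf : forall x (a : R) f g, p x (a *: f + g) = a * p x f + p x g.
Hypothesis px : forall (a : R) x y f, p (a *: x + y) f = a * p x f + p y f.
Hypothesis pb : forall x f, `|p x f| <= `|x| * `|f|.
Hypothesis pn : forall x (e : R), 0 < e -> exists f, `|f| <= 1 /\ `|x| - e < `|p x f|.
Hypothesis ps : forall phi : F -> R,
         (forall (a : R) f g, phi (a *: f + g) = a * phi f + phi g) ->
         (exists M : R, forall f, `|phi f| <= M * `|f|) ->
         exists x, forall f, p x f = phi f.

Lemma p0x f : p 0 f = 0.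
Proof. by apply: dbl0; have := px 1 0 0 f; rewrite scale1r addr0 mul1r. Qed.
Lemma pBx x y f : p (x - y) f = p x f - p y f.
Proof. by rewrite -scaleN1r addrC px mulN1r addrC. Qed.
Lemma pZx a x f : p (a *: x) f = a * p x f.
Proof. by have := px a x 0 f; rewrite addr0 p0x addr0. Qed.
Lemma pDx x y f : p (x + y) f = p x f + p y f.
Proof. by have := px 1 x y f; rewrite scale1r mul1r. Qed.
Lemma pNx x f : p (- x) f = - p x f.
Proof. by rewrite -scaleN1r pZx mulN1r. Qed.
Lemma px0 x : p x 0 = 0.
Proof. by apply: dbl0; have := pf x 1 0 0; rewrite scale1r addr0 mul1r. Qed.

Lemma p_eq x y : (forall f, p x f = p y f) -> x = y.
Proof.
move=> h; apply/eqP; rewrite -subr_eq0; apply/eqP.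
apply/normr0_eq0; apply/eqP; rewrite eq_le normr_ge0 andbT; apply/negP => /negP.
rewrite -ltNge => hz; have [f [_ hf]] := pn (x - y) _ hz.
by move: hf; rewrite subrr pBx h subrr normr0 ltxx.
Qed.

Definition bndE (phi : G -> E) := exists K : R, forall x, `|phi x| <= K.

Lemma bndE_K phi K : (forall x, `|phi x| <= K) -> bndE phi.
Proof. by exists K. Qed.
Arguments bndE_K {phi K}.

Lemma bpf phi K f : (forall x, `|phi x| <= K) -> bounded_on Hs (fun g => p (phi g) f).
Proof. by move=> h; exists (K * `|f|) => x _; apply: le_trans (pb _ _) _; apply: ler_wpM2r. Qed.
Arguments bpf {phi K}.

Definition Mv (phi : G -> E) : E :=
  xget 0 [set x | forall f, p x f = m (fun g => p (phi g) f)].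

Lemma Mv_char phi : bndE phi -> forall f, p (Mv phi) f = m (fun g => p (phi g) f).
Proof.
move=> [K hK]; rewrite /Mv; apply: (xgetPex 0 (P := [set x | forall f, p x f = m (fun g => p (phi g) f)])).
have bf f : bounded_on Hs (fun g => p (phi g) f).
  by exists (K * `|f|) => x _; rewrite (le_trans (pb _ _)) // ler_wpM2r.
apply: ps.
- move=> a f g; apply: mlin' => //= x; exact: pf.
- exists K => f; apply: mbound => // x _; apply: le_trans (pb _ _) _; exact: ler_wpM2r.
Qed.


Lemma Mv_norm phi (K : R) : (forall x, `|phi x| <= K) -> `|Mv phi| <= K.
Proof.
move=> hK; rewrite leNgt; apply/negP => hlt.
have := hlt; rewrite -subr_gt0 => /(pn (Mv phi)) [f [hf1 hf]].
move: hf; rewrite opprB addrC subrK Mv_char; last by exists K.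
rewrite ltNge => /negP; apply; apply: mbound; first by exists (K * `|f|) => x _; rewrite (le_trans (pb _ _)) // ler_wpM2r.
move=> x _; rewrite (le_trans (pb _ _)) //.
have K0 : 0 <= K by apply: le_trans (hK x).
by rewrite (le_trans (ler_wpM2r (normr_ge0 _) (hK x))) // -[leRHS]mulr1 ler_wpM2l.
Qed.

Lemma Mv_lin (a : R) {phi psi} : bndE phi -> bndE psi ->
  Mv (fun x => a *: phi x + psi x) = a *: Mv phi + Mv psi.
Proof.
move=> [K1 h1] [K2 h2]; apply: p_eq => f.
rewrite Mv_char; last first.
  exists (`|a| * K1 + K2) => x; apply: le_trans (ler_normD _ _) _; rewrite normrZ; apply: lerD => //; exact: ler_wpM2l.
rewrite px (Mv_char _ (bndE_K h1)) (Mv_char _ (bndE_K h2)).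
apply: (mlin' a (fun g => p (phi g) f) (fun g => p (psi g) f)).
- exact: bpf h1.
- exact: bpf h2.
- by move=> x; rewrite px.
Qed.

Lemma Mv_cst v : Mv (fun _ => v) = v.
Proof. apply: p_eq => f; rewrite Mv_char ?mcst //; by exists `|v|. Qed.

Lemma Mv_add {phi psi} : bndE phi -> bndE psi -> Mv (fun x => phi x + psi x) = Mv phi + Mv psi.
Proof. move=> b1 b2; have := Mv_lin 1 b1 b2; rewrite scale1r => <-; congr Mv; apply/funext => x; by rewrite scale1r. Qed.

Lemma Mv_sub {phi psi} : bndE phi -> bndE psi -> Mv (fun x => phi x - psi x) = Mv phi - Mv psi.
Proof. move=> b1 b2; have := Mv_lin (-1) b2 b1; rewrite scaleN1r addrC => <-; congr Mv; apply/funext => x; by rewrite scaleN1r addrC. Qed.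

Lemma Mv_opp {phi} : bndE phi -> Mv (fun x => - phi x) = - Mv phi.
Proof. move=> b1; have b0 : bndE (fun _ => 0) by exists 0 => x; rewrite normr0.
have := Mv_sub b0 b1; rewrite Mv_cst sub0r => <-; congr Mv; apply/funext => x; by rewrite sub0r. Qed.

Lemma Mv_inv k {phi} : Hs k -> bndE phi -> Mv (fun x => phi (mul k x)) = Mv phi.
Proof.
move=> hk [K hK]; apply: p_eq => f; rewrite !Mv_char; [| by exists K| by exists K => x].
apply: minv => //; exact: bpf hK.
Qed.

Lemma Mv_adj (T : E -> E) : (forall x, `|T x| = `|x|) ->
  (forall f, exists f', forall y, p (T y) f = p y f') ->
  forall phi, bndE phi -> Mv (fun x => T (phi x)) = T (Mv phi).
Proof.
move=> hT hadj phi [K hK]; apply: p_eq => f; have [f' hf'] := hadj f.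
rewrite hf' !Mv_char; [| by exists K| by exists K => x; rewrite hT].
by congr m; apply/funext => x; rewrite hf'.
Qed.


Lemma normB_le (a b : E) (A B : R) : `|a| <= A -> `|b| <= B -> `|a - b| <= A + B.
Proof. move=> ha hb; have := ler_normB a b; lra. Qed.
Lemma normD_le (a b : E) (A B : R) : `|a| <= A -> `|b| <= B -> `|a + b| <= A + B.
Proof. move=> ha hb; have := ler_normD a b; lra. Qed.

Lemma nat_le (a b : nat) (K : R) : 0 <= K -> (a <= b)%N -> a%:R * K <= b%:R * K.
Proof. by move=> K0 hab; apply: ler_wpM2r => //; rewrite ler_nat. Qed.

Definition shift (c : seq G -> E) (x : G) : seq G -> E := fun t => c (x :: t).
Definition rem_at (i : nat) (s : seq G) := take i s ++ drop i.+1 s.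
Definition dl (c : seq G -> E) (s : seq G) : E :=
  \sum_(0 <= i < size s) ((-1 : R) ^+ i) *: c (rem_at i s).

Fixpoint Hh (t : seq G) (c : seq G -> E) : E :=
  match t with
  | [::] => 0
  | x :: t' => Mv (fun h => c (mul x h :: x :: t') - Hh t' (shift c (mul x h)))
  end.

Fixpoint Qh (t : seq G) (c : seq G -> E) : E :=
  match t with
  | [::] => c [::]
  | x :: t' => Mv (fun h => Qh t' (shift c (mul x h)))
  end.

Lemma dl_nil c : dl c [::] = 0.
Proof. by rewrite /dl big_geq. Qed.

Lemma dl_cons c x t : dl c (x :: t) = c t - dl (shift c x) t.
Proof.
rewrite /dl /= big_nat_recl // expr0 scale1r; congr (_ + _).
  by rewrite /rem_at /= drop0.
rewrite -sumrN; apply: eq_bigr => i _.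
by rewrite exprS mulN1r scaleNr.
Qed.

Lemma dl_sub a b s : dl (fun u => a u - b u) s = dl a s - dl b s.
Proof. by rewrite /dl -sumrB; apply: eq_bigr => i _; rewrite scalerBr. Qed.

Lemma size_rem_at i s : (i < size s)%N -> size (rem_at i s) = (size s).-1.
Proof. move=> hi; rewrite /rem_at size_cat size_take size_drop hi; lia. Qed.

Lemma dl_norm c s (K : R) : 0 <= K -> (forall u, (size u).+1 = size s -> `|c u| <= K) ->
  `|dl c s| <= (size s)%:R * K.
Proof.
move=> K0 hc; rewrite /dl; apply: le_trans (ler_norm_sum _ _ _) _.
rewrite -big_filter. rewrite big_filter.
apply: le_trans (@ler_sum_nat _ 0 (size s) _ (fun _ => K) _) _.
  move=> i /andP[_ hi]; rewrite normrZ normrX normrN1 expr1n mul1r; apply: hc.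
  rewrite size_rem_at //; move: hi; case: (size s) => //.
by rewrite sumr_const_nat subn0 mulr_natl.
Qed.

Lemma Hh_norm t : forall c (K : R), 0 <= K ->
  (forall u, size u = (size t).+1 -> `|c u| <= K) -> `|Hh t c| <= (size t)%:R * K.
Proof.
elim: t => [|x t IH] c K K0 hc /=; first by rewrite normr0 mul0r.
apply: Mv_norm => h.
have h1 : `|c [:: mul x h, x & t]| <= K by apply: hc.
have h2 : `|Hh t (shift c (mul x h))| <= (size t)%:R * K.
  by apply: IH => // u hu; apply: hc; rewrite /= hu.
have h3 := ler_normB (c [:: mul x h, x & t]) (Hh t (shift c (mul x h))).
rewrite -addn1 natrD mulrDl mul1r; lra.
Qed.

Lemma Qh_norm t : forall c (K : R), 0 <= K ->
  (forall u, size u = size t -> `|c u| <= K) -> `|Qh t c| <= K.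
Proof.
elim: t => [|x t IH] c K K0 hc /=; first by apply: hc.
apply: Mv_norm => h; apply: IH => // u hu; apply: hc; by rewrite /= hu.
Qed.

Lemma Hh_vanish t : forall c, (forall u, size u = (size t).+1 -> c u = 0) -> Hh t c = 0.
Proof.
elim: t => [|x t IH] c hc //=.
rewrite (_ : (fun h => _) = fun _ => 0) ?Mv_cst //; apply/funext => h.
by rewrite hc // IH ?subr0 // => u hu; apply: hc; rewrite /= hu.
Qed.

Lemma Hh_sub t : forall c1 c2 (K1 K2 : R), 0 <= K1 -> 0 <= K2 ->
  (forall u, size u = (size t).+1 -> `|c1 u| <= K1) ->
  (forall u, size u = (size t).+1 -> `|c2 u| <= K2) ->
  Hh t (fun u => c1 u - c2 u) = Hh t c1 - Hh t c2.
Proof.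
elim: t => [|x t IH] c1 c2 K1 K2 K10 K20 h1 h2 /=; first by rewrite subr0.
have s1 y : forall u, size u = (size t).+1 -> `|shift c1 y u| <= K1.
  by move=> u hu; apply: h1; rewrite /= hu.
have s2 y : forall u, size u = (size t).+1 -> `|shift c2 y u| <= K2.
  by move=> u hu; apply: h2; rewrite /= hu.
rewrite -Mv_sub; first last.
- exists (K2 + (size t)%:R * K2) => h; apply: normB_le; first exact: h2.
  by apply: Hh_norm => //; exact: s2.
- exists (K1 + (size t)%:R * K1) => h; apply: normB_le; first exact: h1.
  by apply: Hh_norm => //; exact: s1.
congr Mv; apply/funext => h.
rewrite (IH (shift c1 (mul x h)) (shift c2 (mul x h)) K1 K2) //.
apply: p_eq => f; rewrite !pBx; lra.
  exact: s1.
exact: s2.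
Qed.

Lemma dl_Mv s : forall (Phi : G -> seq G -> E) (K : R), 0 <= K ->
  (forall h u, (size u).+1 = size s -> `|Phi h u| <= K) ->
  dl (fun u => Mv (fun h => Phi h u)) s = Mv (fun h => dl (Phi h) s).
Proof.
elim: s => [|x t IH] Phi K K0 hP.
  by rewrite dl_nil (_ : (fun h => _) = fun _ => 0) ?Mv_cst //; apply/funext => h; rewrite dl_nil.
rewrite dl_cons.
rewrite (IH (fun h u => Phi h (x :: u)) K) //; last by move=> h u hu; apply: hP; rewrite /= hu.
rewrite -Mv_sub.
- by congr Mv; apply/funext => h; rewrite dl_cons.
- by exists K => h; apply: hP.
- exists ((size t)%:R * K) => h; apply: dl_norm => // u hu; apply: hP; by rewrite /= hu.
Qed.

Lemma ident t : forall c (K : R), 0 <= K -> (forall u, size u = size t -> `|c u| <= K) ->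
  c t - Qh t c = dl (fun u => Hh u c) t + Hh t (dl c).
Proof.
elim: t => [|x t IH] c K K0 hc.
  by rewrite /= subrr dl_nil addr0.
have hcs y : forall u, size u = size t -> `|shift c y u| <= K.
  by move=> u hu; apply: hc; rewrite /= hu.
have sK0 : 0 <= (size t)%:R * K by apply: mulr_ge0.
pose D := fun h => dl (shift (shift c (mul x h)) x) t - dl (fun u => Hh u (shift c (mul x h))) t.
have bD : forall h, `|D h| <= (size t)%:R * K + (size t)%:R * ((size t)%:R * K).
  move=> h; apply: normB_le.
    by apply: dl_norm => // u hu; apply: hc; rewrite /= hu.
  apply: dl_norm => // u hu.
  have hh : `|Hh u (shift c (mul x h))| <= (size u)%:R * K.
    by apply: Hh_norm => // v hv; apply: hc; rewrite /= hv hu.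
  by apply: le_trans hh _; apply: nat_le => //; rewrite -hu.
have hA : dl (fun u => Hh u c) (x :: t) = Hh t c - Mv D.
  rewrite dl_cons; congr (_ - _).
  rewrite (dl_Mv t (fun h u => c (mul x h :: x :: u) - Hh u (shift c (mul x h))) (K + (size t)%:R * K)).
  - by congr Mv; apply/funext => h; rewrite /D; exact: dl_sub.
  - by apply: addr_ge0.
  move=> h u hu; apply: normB_le; first by apply: hc; rewrite /= hu.
  have hh : `|Hh u (shift c (mul x h))| <= (size u)%:R * K.
    by apply: Hh_norm => // v hv; apply: hc; rewrite /= hv hu.
  by apply: le_trans hh _; apply: nat_le => //; rewrite -hu.
have hB : (fun h => dl c (mul x h :: x :: t) - Hh t (shift (dl c) (mul x h))) =
   fun h => (c (x :: t) - Hh t c) + D h - Qh t (shift c (mul x h)).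
  apply/funext => h; set y := mul x h.
  rewrite (_ : shift (dl c) y = fun u => c u - dl (shift c y) u); last first.
    by apply/funext => u; rewrite /shift dl_cons.
  have b1 : forall u, size u = (size t).+1 -> `|c u| <= K by exact: hc.
  have b2 : forall u, size u = (size t).+1 -> `|dl (shift c y) u| <= (size t).+1%:R * K.
    move=> u hu; rewrite -hu; apply: dl_norm => // v hv; apply: hc; by rewrite /= hv hu.
  have b3 : 0 <= (size t).+1%:R * K by apply: mulr_ge0.
  rewrite (Hh_sub t c (dl (shift c y)) K ((size t).+1%:R * K) K0 b3 b1 b2).
  have e := IH (shift c y) K K0 (hcs y).
  rewrite dl_cons dl_cons /D -/y.
  apply: p_eq => f; move: e => /(congr1 (fun z => p z f)).
  rewrite !(pBx, pDx, pNx); lra.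
rewrite hA [Hh (x :: t) (dl c)]/= [Qh (x :: t) c]/= hB.
have bQ : bndE (fun h => Qh t (shift c (mul x h))).
  by exists K => h; apply: Qh_norm => //; exact: hcs.
have bDD : bndE D by exists ((size t)%:R * K + (size t)%:R * ((size t)%:R * K)).
have bA : bndE (fun h => (c (x :: t) - Hh t c) + D h).
  exists (`|c (x :: t) - Hh t c| + ((size t)%:R * K + (size t)%:R * ((size t)%:R * K))) => h.
  by apply: normD_le.
have bc : bndE (fun _ : G => c (x :: t) - Hh t c) by exists `|c (x :: t) - Hh t c|.
rewrite (Mv_sub bA bQ) (Mv_add bc bDD) Mv_cst.
apply: p_eq => f; rewrite !(pBx, pDx, pNx); lra.
Qed.

Variable one : G.
Variable pi : G -> E -> E.
Hypothesis pilin : forall s (a : R) x y, pi s (a *: x + y) = a *: pi s x + pi s y.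
Hypothesis piiso : forall s x, `|pi s x| = `|x|.
Hypothesis piadj : forall s f, exists f', forall y, p (pi s y) f = p y f'.
Hypothesis massoc : forall x y z, mul x (mul y z) = mul (mul x y) z.

Lemma piB s x y : pi s (x - y) = pi s x - pi s y.
Proof.
have pi0 : pi s 0 = 0 by apply: dbl0; have := pilin s 1 0 0; rewrite !scale1r addr0.
by rewrite -scaleN1r addrC pilin scaleN1r addrC.
Qed.

Lemma Qh_equiv t : forall c c' s (K : R), 0 <= K ->
  (forall u, size u = size t -> `|c' u| <= K) ->
  (forall u, size u = size t -> c (map (mul s) u) = pi s (c' u)) ->
  Qh (map (mul s) t) c = pi s (Qh t c').
Proof.
elim: t => [|x t IH] c c' s K K0 hb hc /=; first exact: (hc [::] erefl).
rewrite -(Mv_adj (pi s) (piiso s) (piadj s)); last first.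
  by exists K => h; apply: Qh_norm => // u hu; apply: hb; rewrite /= hu.
congr Mv; apply/funext => h; rewrite -massoc.
apply: (IH _ _ s K) => // u hu; first by apply: hb; rewrite /= hu.
by have := hc (mul x h :: u); rewrite /= hu; apply.
Qed.

Lemma Hh_equiv t : forall c c' s (K : R), 0 <= K ->
  (forall u, size u = (size t).+1 -> `|c' u| <= K) ->
  (forall u, size u = (size t).+1 -> c (map (mul s) u) = pi s (c' u)) ->
  Hh (map (mul s) t) c = pi s (Hh t c').
Proof.
elim: t => [|x t IH] c c' s K K0 hb hc /=.
  by have := piB s 0 0; rewrite subrr => ->; rewrite subrr.
rewrite -(Mv_adj (pi s) (piiso s) (piadj s)); last first.
  exists (K + (size t)%:R * K) => h; apply: normB_le; first by apply: hb.
  by apply: Hh_norm => // u hu; apply: hb; rewrite /= hu.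
congr Mv; apply/funext => h; rewrite -massoc piB.
congr (_ - _); first by have := hc [:: mul x h, x & t]; apply.
apply: (IH _ _ s K) => // u hu; first by apply: hb; rewrite /= hu.
by have := hc (mul x h :: u); rewrite /= hu; apply.
Qed.

Lemma Qh_inv t : forall c (k : G -> G) (K : R), 0 <= K ->
  (forall u, size u = size t -> `|c u| <= K) ->
  (forall i, (i < size t)%N -> Hs (k (nth one t i))) ->
  Qh (map (fun x => mul x (k x)) t) c = Qh t c.
Proof.
elim: t => [|x t IH] c k K K0 hb hk //=.
have hb' y : forall u, size u = size t -> `|shift c y u| <= K.
  by move=> u hu; apply: hb; rewrite /= hu.
rewrite (_ : (fun h => _) = fun h => (fun y => Qh t (shift c (mul x y))) (mul (k x) h)).
  apply: Mv_inv; first exact: (hk 0%N).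
  by exists K => y; apply: Qh_norm => //; exact: hb'.
apply/funext => h; rewrite (IH _ _ K) //; [by rewrite massoc | exact: hb' | by move=> i hi; apply: (hk i.+1)].
Qed.

Lemma rem_at_nth (s : seq G) x0 n (i : 'I_n.+2) (j : 'I_n.+1) :
  size s = n.+2 -> nth x0 (rem_at i s) j = nth x0 s (lift i j).
Proof.
move=> hs; rewrite /rem_at nth_cat size_take hs ltn_ord /= /bump.
case: (ltnP j i) => h.
  by rewrite nth_take // leqNgt h add0n.
by rewrite nth_drop add1n; congr nth; lia.
Qed.

Definition tup {n} (g : 'I_n.+1 -> G) : seq G := mkseq (fun j => g (inord j)) n.+1.

Lemma size_tup {n} (g : 'I_n.+1 -> G) : size (tup g) = n.+1.
Proof. exact: size_mkseq. Qed.

Lemma nth_tup {n} (g : 'I_n.+1 -> G) x0 (i : 'I_n.+1) : nth x0 (tup g) i = g i.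
Proof. by rewrite /tup nth_mkseq // inord_val. Qed.

Lemma tup_map {n} (g : 'I_n.+1 -> G) s : tup (fun i => mul s (g i)) = map (mul s) (tup g).
Proof. by rewrite /tup /mkseq -map_comp. Qed.

Lemma rem_at_tup {n} (g : 'I_n.+2 -> G) (i : 'I_n.+2) :
  rem_at i (tup g) = tup (fun j : 'I_n.+1 => g (lift i j)).
Proof.
have hsz : size (rem_at i (tup g)) = n.+1 by rewrite size_rem_at ?size_tup.
apply: (@eq_from_nth _ one); first by rewrite hsz size_tup.
move=> j; rewrite hsz => hj.
have -> : j = Ordinal hj by [].
rewrite rem_at_nth ?size_tup // !nth_tup //.
Qed.

Variable inv : G -> G.
Hypothesis hgroup : is_group mul inv one.
Hypothesis hnormalish : normalish mul inv Hs.
Hypothesis hmix : mixing pi.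

Lemma main_sec n : Hb_trivial mul pi n.
Proof.
move=> c [K0 hK] heq hcoc.
have K00 : 0 <= K0 by apply: le_trans (hK (fun _ => one)).
pose C := fun s : seq G => c (fun i => nth one s i).
have hCb : forall u, `|C u| <= K0 by move=> u; exact: hK.
have hCeq : forall s u, size u = n.+1 -> C (map (mul s) u) = pi s (C u).
  move=> s u hu; rewrite /C -heq; congr c; apply/funext => i.
  by rewrite (nth_map one) // hu.
have hcocl : forall u, size u = n.+2 -> dl C u = 0.
  move=> u hu; have := congr1 (fun f => f (fun i : 'I_n.+2 => nth one u i)) hcoc => /= <-.
  rewrite /dl /coboundary hu big_mkord.
  apply: eq_bigr => i _; congr (_ *: _); rewrite /C; congr c; apply/funext => j.
  exact: rem_at_nth.
have hQ : forall s, size s = n.+1 -> Qh s C = 0.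
  move=> s hs; apply: contrapT => hne.
  have hv : Qh s C != 0 by apply/eqP.
  have hfin := hmix (Qh s C) hv.
  apply: (hnormalish n (fun i : 'I_n.+1 => nth one s i)).
  apply: sub_finite_set hfin => sg /= hsg.
  rewrite -(Qh_equiv s C C sg K0 K00 (fun u _ => hCb u) (fun u hu => hCeq sg u (etrans hu hs))).
  case: hgroup => _ h1l _ _ hinvr.
  rewrite (_ : map (mul sg) s = map (fun x => mul x (mul (mul (inv x) sg) x)) s); last first.
    by apply: eq_map => x; rewrite !massoc hinvr h1l.
  apply: (Qh_inv s C _ K0 K00 (fun u _ => hCb u)) => i hi.
  have hi' : (i < n.+1)%N by rewrite -hs.
  exact: (hsg (Ordinal hi')).
have hH : forall s, size s = n.+1 -> C s = dl (fun u => Hh u C) s.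
  move=> s hs; have := ident s C K0 K00 (fun u _ => hCb u).
  rewrite hQ // (Hh_vanish s (dl C)) ?subr0 ?addr0 // => u hu; apply: hcocl; by rewrite hu hs.
have hCdef : forall s, C s = c (fun i => nth one s i) by [].
clearbody C.
case: n c hK heq hcoc C hCdef hCb hCeq hcocl hQ hH => [|m'] c hK heq hcoc C hCdef hCb hCeq hcocl hQ hH.
  apply/funext => g; have := hH (tup g) (size_tup g).
  rewrite /tup /= dl_cons dl_nil /= subr0 hCdef => <-; congr c; apply/funext => i.
  by rewrite (ord1 i) /=; congr g; apply/val_inj; rewrite /= inordK.
exists (fun g => Hh (tup g) C); split.
- exists ((m'.+1)%:R * K0) => g; rewrite -(size_tup g); apply: Hh_norm => // u _; exact: hCb.
- move=> sg g; rewrite tup_map (Hh_equiv (tup g) C C sg K0 K00 (fun u _ => hCb u)) //.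
  by move=> u; rewrite size_tup => hu; apply: hCeq.
- apply/funext => g; rewrite /coboundary.
  have -> : c g = C (tup g) by rewrite hCdef; congr c; apply/funext => i; rewrite nth_tup.
  rewrite hH ?size_tup // /dl size_tup big_mkord; apply: eq_bigr => i _.
  by rewrite rem_at_tup.
Qed.

End Mean.

Theorem proposition3p2 (R : realType) (G : Type) (mul : G -> G -> G) (inv : G -> G)
  (one : G) (HG : is_group mul inv one)
  (Hex : exists H : set G, [/\ is_subgroup mul inv one H,
                              amenable_subgroup R mul H & normalish mul inv H]) :
  forall (E : completeNormedModType R) (F : completeNormedModType R)
         (p : E -> F -> R) (pi : G -> E -> E),
    coefficient_module mul one p pi -> mixing pi ->
    forall n : nat, Hb_trivial mul pi n.
Proof.
move=> E F p pi [_ [[pf px pb pn ps] [hwc [pilin [piiso _]]]]] hmix n.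
case: Hex => Hs [_ [m [_ mlin mpos m1 minv]] hnorm].
have hassoc : forall x y z, mul x (mul y z) = mul (mul x y) z by case: HG.
exact: (@main_sec R G mul Hs m mlin mpos m1 minv E F p pf px pb pn ps one pi pilin piiso
  (fun s f => @adjoint R E F p pf px (pi s) (pilin s) (hwc s) f) hassoc inv HG hnorm hmix n).
Qed.
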